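(* Let $H$ be a bigraph. If the pair-digraph $H^+$ has a self-coupled strong component, then $H$ is not an interval bigraph; equivalently, $V(H)$ admits no linear ordering $<$ without three vertices $a<b<c$ such that $a,b$ have the same colour, $c$ has the opposite colour, $ac\in E(H)$ and $bc\notin E(H)$.
   Context: A bigraph is a bipartite graph $H$ with a fixed bipartition $V(H)=B\cup W$ (black and white vertices). $H$ is an interval bigraph if there are intervals $I_v$, $v\in V(H)$, such that for $x\in B$, $y\in W$: $xy\in E(H)$ iff $I_x\cap I_y\neq\emptyset$. By a theorem of Hell and Huang, $H$ is an interval bigraph iff $V(H)$ has a linear ordering $<$ with no $a<b<c$ where $a,b$ have the same colour, $c$ the opposite colour, $ac\in E(H)$, $bc\notin E(H)$. The pair-digraph $H^+$ has vertices all ordered pairs $(u,v)$, $u\ne v$, and arcs $(u,v)\to(u',v)$ whenever $u,v$ have the same colour, $uu'\in E(H)$, $vu'\notin E(H)$, and $(u,v)\to(u,v')$ whenever $u,v$ have different colours, $vv'\in E(H)$, $uv\notin E(H)$. For a set $S$ of vertices of $H^+$, $S'=\{(u,v):(v,u)\in S\}$. A strong component $S$ of $H^+$ is self-coupled if $S=S'$. *)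

(* Defs.v *)
From mathcomp Require Import all_boot.
Set Implicit Arguments. Unset Strict Implicit. Unset Printing Implicit Defensive.

Definition is_bigraph (V : finType) (col : V -> bool) (E : rel V) : Prop :=
  symmetric E /\ (forall x y, E x y -> col x != col y).

Definition pair_arc (V : finType) (col : V -> bool) (E : rel V)
    : rel (V * V) :=
  fun p q =>
    let: (u, v) := p in let: (u', v') := q in
    [&& u != v, u' != v' &
      (((v' == v) && (col u == col v) && E u u' && ~~ E v u')
       || ((u' == u) && (col u != col v) && E v v' && ~~ E u v))].

Definition strong_comp (V : finType) (col : V -> bool) (E : rel V)
    (p : V * V) : {set V * V} :=
  [set q | connect (pair_arc col E) p q && connect (pair_arc col E) q p].

Definition coupled (V : finType) (S : {set V * V}) : {set V * V} :=
  [set q | (q.2, q.1) \in S].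

Definition has_self_coupled_comp (V : finType) (col : V -> bool) (E : rel V)
    : Prop :=
  exists p : V * V, p.1 != p.2 /\
    coupled (strong_comp col E p) = strong_comp col E p.

Definition strict_linear_order (V : finType) (lt : rel V) : Prop :=
  irreflexive lt /\ transitive lt /\ (forall x y, x != y -> lt x y || lt y x).

Definition no_bad_triple (V : finType) (col : V -> bool) (E : rel V)
    (lt : rel V) : Prop :=
  forall a b c, lt a b -> lt b c -> col a = col b -> col c != col a ->
    E a c -> E b c.

(* Main.v *)
Require Import Defs.
From mathcomp Require Import all_boot.

Lemma step_lt (V : finType) (col : V -> bool) (E : rel V) (lt : rel V) :
  is_bigraph col E -> strict_linear_order lt -> no_bad_triple col E lt ->
  forall p q, pair_arc col E p q -> lt p.1 p.2 -> lt q.1 q.2.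
Proof.
move=> [Esym Ecol] [irr [tr tot]] nb [u v] [u' v'] /= /and3P [nuv nuv' /orP H] luv.
case: H => /andP [/andP [/andP [/eqP ev cuv] Euu'] nEvu']; subst.
- have nvu' : v != u'.
    by apply/eqP => e; subst; move: (Ecol _ _ Euu'); rewrite (eqP cuv) eqxx.
  case/orP: (tot _ _ nvu') => // lvu'.
  have := nb u v u' luv lvu' (eqP cuv).
  have cu' := Ecol _ _ Euu'.
  by rewrite eq_sym cu' Euu' (negbTE nEvu') => /(_ isT isT).
- case/orP: (tot _ _ nuv') => // lv'u.
  have cvv := Ecol _ _ Euu'.
  have cv'u : col v' = col u.
    by move: cuv cvv; case: (col u); case: (col v); case: (col v').
  have := nb v' u v lv'u luv cv'u.
  rewrite cv'u eq_sym cuv Esym Euu' (negbTE nEvu') => /(_ isT isT).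
  done.
Qed.

Lemma conn_lt (V : finType) (col : V -> bool) (E : rel V) (lt : rel V) :
  is_bigraph col E -> strict_linear_order lt -> no_bad_triple col E lt ->
  forall p q, connect (pair_arc col E) p q -> lt p.1 p.2 -> lt q.1 q.2.
Proof.
move=> HB HL NB p q /connectP [s Hp ->] {q}.
elim: s p Hp => //= x s IH p /andP [a Hs] l.
apply: IH Hs _; exact: (@step_lt _ _ _ _ HB HL NB _ _ a l).
Qed.

Theorem lemma2p3 (V : finType) (col : V -> bool) (E : rel V) :
  is_bigraph col E ->
  has_self_coupled_comp col E ->
  ~ (exists lt : rel V, strict_linear_order lt /\ no_bad_triple col E lt).
Proof.
move=> HB [[a b] [/= nab Hc]] [lt [HL NB]].
have Hp : (a, b) \in strong_comp col E (a, b).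
  by rewrite inE connect0.
rewrite -Hc inE /= inE in Hp.
case/andP: Hp => c1 c2.
have H1 := @conn_lt _ _ _ _ HB HL NB _ _ c1.
have H2 := @conn_lt _ _ _ _ HB HL NB _ _ c2.
move: HL => [irr [tr tot]].
case/orP: (tot _ _ nab) => l.
- have l' := H1 l. by move: (irr a); rewrite (tr _ _ _ l l').
- have l' := H2 l. by move: (irr a); rewrite (tr _ _ _ l' l).
Qed.
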